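(* Let $\psi$ be admissible, let $Q$ be a $\partial_\psi$-delta operator with $\partial_\psi$-basic polynomial sequence $(p_n)_{n\ge0}$, and let $S\in\Sigma_\psi$ be invertible with $Q=\partial_\psi S$. Then for every $n>0$: (1) $p_n(x)=Q'\,S^{-n-1}x^n$; (2) $p_n(x)=S^{-n}x^n-\frac{n_\psi}{n}\,(S^{-n})'\,x^{n-1}$; (3) $p_n(x)=\frac{n_\psi}{n}\,\hat x_\psi\, S^{-n}x^{n-1}$; (4) $Q'$ is invertible and $p_n(x)=\frac{n_\psi}{n}\,\hat x_\psi\,(Q')^{-1}p_{n-1}(x)$ (the $\psi$-Rodrigues formula).
   Context: $\mathbf F$ is a field of characteristic zero and $P=\mathbf F[x]$; $\mathrm{End}(P)$ is the algebra of linear operators on $P$. An admissible sequence is $\psi=(\psi_n)_{n\ge0}$ with $\psi_n\in\mathbf F$, $\psi_0=1$, $\psi_n\neq0$; $n_\psi=\psi_{n-1}/\psi_n$ ($n\ge1$), $0_\psi=0$, $n_\psi!=n_\psi(n-1)_\psi\cdots1_\psi$, $0_\psi!=1$. The $\psi$-derivative is $\partial_\psi x^n=n_\psi x^{n-1}$. For $y\in\mathbf F$, $E^y(\partial_\psi)=\sum_{k\ge0}\frac{y^k}{k_\psi!}\partial_\psi^{\,k}$. $\Sigma_\psi=\{T\in\mathrm{End}(P):[T,E^\alpha(\partial_\psi)]=0\ \forall\alpha\in\mathbf F\}$. A $\partial_\psi$-delta operator is $Q\in\Sigma_\psi$ with $Q(x)$ a nonzero constant. Its $\partial_\psi$-basic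 polynomial sequence is the sequence $(p_n)_{n\ge0}$ with $\deg p_n=n$, $p_0=1$, $p_n(0)=0$ for $n>0$, and $Qp_n=n_\psi p_{n-1}$. The operator $\hat x_\psi$ is the linear map on $P$ with $\hat x_\psi x^n=\frac{n+1}{(n+1)_\psi}x^{n+1}$ ($n\ge0$). The Pincherle $\psi$-derivative of $T\in\Sigma_\psi$ is $T'=T\hat x_\psi-\hat x_\psi T$. *)

(* Defs.v *)
From HB Require Import structures.
From mathcomp Require Import all_boot all_order all_algebra.
Set Implicit Arguments. Unset Strict Implicit. Unset Printing Implicit Defensive.
Import Order.TTheory GRing.Theory Num.Theory.
Local Open Scope ring_scope.

Section PsiCalculus.
Variable F : fieldType.

(* Elements of End(P), P = F[x]: linear maps {poly F} -> {poly F}. *)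
Definition linop := {poly F} -> {poly F}.

Definition admissible (psi : nat -> F) : Prop :=
  psi 0%N = 1 /\ forall n, psi n != 0.

Definition npsi (psi : nat -> F) (n : nat) : F :=
  if n is m.+1 then psi m / psi n else 0.

Fixpoint fact_psi (psi : nat -> F) (n : nat) : F :=
  if n is m.+1 then npsi psi n * fact_psi psi m else 1.

(* psi-derivative: x^n |-> n_psi x^(n-1) *)
Definition dpsi (psi : nat -> F) : linop := fun p =>
  \poly_(i < (size p).-1) (p`_i.+1 * npsi psi i.+1).

(* E^y(d_psi) = sum_k y^k / k_psi! d_psi^k (finite on each polynomial,
   since d_psi^k p = 0 for k >= size p) *)
Definition Epsi (psi : nat -> F) (y : F) : linop := fun p =>
  \sum_(k < size p) ((y ^+ k / fact_psi psi k) *: iter k (dpsi psi) p).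

Definition Sigma_psi (psi : nat -> F) (T : linop) : Prop :=
  linear T /\ forall (a : F) (p : {poly F}), T (Epsi psi a p) = Epsi psi a (T p).

Definition delta_op (psi : nat -> F) (Q : linop) : Prop :=
  Sigma_psi psi Q /\ exists c : F, c != 0 /\ Q 'X = c%:P.

(* d_psi-basic polynomial sequence of Q (with 0_psi = 0 the n = 0 case
   reads Q p_0 = 0) *)
Definition basic_seq (psi : nat -> F) (Q : linop) (p : nat -> {poly F}) : Prop :=
  [/\ forall n, size (p n) = n.+1,
      p 0%N = 1,
      forall n, (0 < n)%N -> (p n).[0] = 0
    & forall n, Q (p n) = npsi psi n *: p n.-1].

(* x-hat_psi : x^n |-> (n+1)/(n+1)_psi x^(n+1) *)
Definition xhat (psi : nat -> F) : linop := fun p =>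
  \poly_(i < (size p).+1)
     (if i is j.+1 then p`_j * (j.+1)%:R / npsi psi j.+1 else 0).

Definition pincherle (psi : nat -> F) (T : linop) : linop := fun p =>
  T (xhat psi p) - xhat psi (T p).

End PsiCalculus.

(* Main.v *)
Require Import Defs.
From HB Require Import structures.
From mathcomp Require Import all_boot all_order all_algebra.
Set Implicit Arguments. Unset Strict Implicit. Unset Printing Implicit Defensive.
Import Order.TTheory GRing.Theory Num.Theory.
Local Open Scope ring_scope.

Section Basics.
Variable (F : fieldType) (psi : nat -> F).
Hypothesis Hpsi : admissible psi.

Local Notation D := (dpsi psi).
Local Notation Xh := (xhat psi).
Local Notation fct := (fact_psi psi).

Definition lin (f : {poly F} -> {poly F}) := forall a u v, f (a *: u + v) = a *: f u + f v.

Lemma lin0 f : lin f -> f 0 = 0.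
Proof.
move=> h; have := h 1 0 0; rewrite scale1r !addr0 scale1r => e.
have : f 0 + 0 = f 0 + f 0 by rewrite addr0 -e.
by move/addrI.
Qed.

Lemma linZ f a u : lin f -> f (a *: u) = a *: f u.
Proof. by move=> h; rewrite -[a *: u]addr0 h lin0 // addr0. Qed.

Lemma linD f u v : lin f -> f (u + v) = f u + f v.
Proof. by move=> h; have := h 1 u v; rewrite !scale1r. Qed.

Lemma linN f u : lin f -> f (- u) = - f u.
Proof. by move=> h; rewrite -scaleN1r linZ // scaleN1r. Qed.

Lemma linB f u v : lin f -> f (u - v) = f u - f v.
Proof. by move=> h; rewrite linD // linN. Qed.

Lemma lin_sum f n (b : nat -> F) (w : nat -> {poly F}) : lin f ->
  f (\sum_(i < n) b i *: w i) = \sum_(i < n) b i *: f (w i).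
Proof.
move=> h; elim: n => [|n IH]; first by rewrite !big_ord0 lin0.
by rewrite !big_ord_recr /= linD // linZ // IH.
Qed.

Lemma npsi_neq0 n : (0 < n)%N -> npsi psi n != 0.
Proof.
case: Hpsi => _ h; case: n => // m _; by rewrite /npsi mulf_neq0 // invr_eq0.
Qed.

Lemma fct_neq0 n : fct n != 0.
Proof. elim: n => [|n IH] /=; first exact: oner_neq0. by rewrite mulf_neq0 // (npsi_neq0 (ltn0Sn n)). Qed.

Lemma coef_dpsi q i : (D q)`_i = q`_i.+1 * npsi psi i.+1.
Proof.
rewrite /dpsi coef_poly; case: ltnP => // h.
by rewrite nth_default ?mul0r //; move: h; case: (size q).
Qed.

Lemma coef_xhat q i : (Xh q)`_i = if i is j.+1 then q`_j * j.+1%:R / npsi psi j.+1 else 0.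
Proof.
rewrite /xhat coef_poly; case: ltnP => //; case: i => // j h.
by rewrite nth_default ?mul0r.
Qed.

Lemma lin_dpsi : lin D.
Proof. move=> a u v; apply/polyP => i; by rewrite coef_dpsi !coefD !coefZ !coef_dpsi mulrDl mulrA. Qed.

Lemma lin_xhat : lin Xh.
Proof.
move=> a u v; apply/polyP => i; rewrite coef_xhat !coefD !coefZ !coef_xhat.
case: i => [|j]; first by rewrite mulr0 addr0.
by rewrite coefD coefZ !mulrDl !mulrA.
Qed.

Lemma xhat0 q : (Xh q).[0] = 0.
Proof. by rewrite horner_coef0 coef_xhat. Qed.

Lemma size_dpsi q : size (D q) = (size q).-1.
Proof.
rewrite /dpsi; case: (ltnP 1 (size q)) => h.
  have hn : (size q).-1 = ((size q).-1.-1).+1 by rewrite prednK // -ltnS prednK // ltnW.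
  apply: size_poly_eq; rewrite -hn; apply: mulf_neq0; last by rewrite npsi_neq0 // hn.
  have: q != 0 by rewrite -size_poly_eq0 -lt0n ltnW.
  by rewrite -lead_coef_eq0 lead_coefE.
have : leq (size (\poly_(i < (size q).-1) (q`_i.+1 * npsi psi i.+1))) 0.
  by apply: leq_trans (size_poly _ _) _; case: (size q) h => [|[|]].
by rewrite leqn0 => /eqP ->; case: (size q) h => [|[|]].
Qed.

Lemma size_iter k (q : {poly F}) : size (iter k D q) = (size q - k)%N.
Proof. elim: k => [|k IH]; by rewrite ?subn0 // iterS size_dpsi IH subnS. Qed.

Lemma iter_vanish k (q : {poly F}) : (size q <= k)%N -> iter k D q = 0.
Proof. by move=> h; apply/eqP; rewrite -size_poly_eq0 size_iter subn_eq0. Qed.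

Lemma coef_iterM k q m : (iter k D q)`_m * fct m = q`_(m + k) * fct (m + k).
Proof.
elim: k m => [|k IH] m; first by rewrite addn0.
by rewrite iterS coef_dpsi -mulrA -[_ * fct m]/(fct m.+1) IH addSnnS.
Qed.

Lemma coef_iter k q m : (iter k D q)`_m = q`_(m + k) * fct (m + k) / fct m.
Proof. by rewrite -coef_iterM mulfK // fct_neq0. Qed.

Lemma X1 q : D (Xh q) - Xh (D q) = q.
Proof.
apply/polyP => i; rewrite coefB coef_dpsi !coef_xhat.
rewrite divfK ?npsi_neq0 //; case: i => [|j]; first by rewrite subr0 mulr1.
rewrite (coef_dpsi q j) [_ * npsi psi _ * _]mulrAC mulfK ?npsi_neq0 // -mulrBr.
by rewrite -natrB // subSnn mulr1.
Qed.

Lemma dpsiXn n : D ('X^n : {poly F}) = npsi psi n *: 'X^(n.-1).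
Proof.
apply/polyP => i; rewrite coef_dpsi coefZ !coefXn.
case: n => [|m]; first by rewrite /= ?mul0r ?mulr0 ?mul0r.
rewrite eqSS /=; case: eqP => [->|] /=; by rewrite ?mulr1 ?mul1r ?mul0r ?mulr0.
Qed.

Lemma xhatXn n : Xh ('X^n : {poly F}) = (n.+1%:R / npsi psi n.+1) *: 'X^(n.+1).
Proof.
apply/polyP => i; rewrite coef_xhat coefZ.
case: i => [|j]; first by rewrite coefXn mulr0.
rewrite !coefXn eqSS; case: eqP => [->|] /=; by rewrite ?mulr1 ?mul1r ?mul0r ?mulr0.
Qed.

Lemma horner_Epsi0 a r : (Epsi psi a r).[0] = r.[a].
Proof.
rewrite /Epsi horner_coef0 coef_sum horner_coef; apply: eq_bigr => k _.
by rewrite coefZ coef_iter add0n /= divr1 mulrCA divfK ?fct_neq0.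
Qed.

Lemma mulr5 (x y z w v : F) : x * y * (z * w * v) = z * w * y * x * v.
Proof. by rewrite !mulrA; congr (_ * _); rewrite [RHS]mulrC [z * w * y]mulrC !mulrA. Qed.

Lemma Epsi_sym a q :
  Epsi psi a q = \sum_(j < size q) ((iter j D q).[a] / fct j) *: 'X^j.
Proof.
apply/polyP => m; rewrite /Epsi coef_sumMXn coef_sum (big_ord1_cond_eq _ (fun j => (iter j D q).[a] / fct j) predT) andbT.
case: ltnP => hm; last first.
  by apply: big1 => k _; rewrite coefZ coef_iter nth_default ?mul0r ?mulr0 // (leq_trans hm) // leq_addr.
rewrite (horner_coef_wide _ (n := size q)); last by rewrite size_iter leq_subr.
rewrite mulr_suml; apply: eq_bigr => k _; rewrite coefZ !coef_iter addnC.
exact: mulr5.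
Qed.

Hypothesis charF0 : [pchar F] =i pred0.

Lemma natr_le_inj (i j : nat) : (i%:R = j%:R :> F) -> (i <= j)%N -> i = j.
Proof.
move=> e h; have H n : (n%:R == 0 :> F) = (n == 0)%N by apply: (pcharf0P F).1.
by apply/eqP; rewrite eqn_leq h /= -subn_eq0 -H natrB // e subrr.
Qed.

Lemma natr_inj : injective (fun n : nat => n%:R : F).
Proof.
move=> i j /= e; case: (leqP i j) => h; first exact: natr_le_inj.
by apply: esym; apply: natr_le_inj (esym e) (ltnW h).
Qed.

Lemma poly_eval0 (r : {poly F}) : (forall a, r.[a] = 0) -> r = 0.
Proof.
move=> h; apply/eqP; apply/negPn/negP => nz.
pose rs := [seq (i%:R : F) | i <- iota 0 (size r)].
have Hall : all (root r) rs by apply/allP => x _; rewrite /root h.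
have Hu : uniq rs by rewrite map_inj_uniq ?iota_uniq //; apply: natr_inj.
by have := max_poly_roots nz Hall Hu; rewrite size_map size_iota ltnn.
Qed.

Lemma lin_sigma T : Sigma_psi psi T -> lin T.
Proof. by case=> h _ a u v; apply: h. Qed.

Definition cS (T : {poly F} -> {poly F}) j := (T 'X^j).[0] / fct j.

Lemma sigma_struct T q : Sigma_psi psi T ->
  T q = \sum_(j < size q) cS T j *: iter j D q.
Proof.
move=> hT; have hlin := lin_sigma hT; case: hT => _ hE.
apply/eqP; rewrite -subr_eq0; apply/eqP; apply: poly_eval0 => a.
rewrite hornerD hornerN; apply/eqP; rewrite subr_eq0; apply/eqP.
rewrite -horner_Epsi0 -hE Epsi_sym.
rewrite (lin_sum _ (fun j => (iter j D q).[a] / fct j) (fun j => 'X^j) hlin).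
rewrite !horner_sum; apply: eq_bigr => j _; rewrite !hornerZ /cS.
by rewrite mulrAC [RHS]mulrAC; congr (_ * _); rewrite mulrC.
Qed.

Definition comm (U : {poly F} -> {poly F}) := lin U /\ forall q, U (D q) = D (U q).

Lemma comm_iter U k q : comm U -> U (iter k D q) = iter k D (U q).
Proof. by case=> _ h; elim: k => [|k IH] //=; rewrite h IH. Qed.

Lemma comm_size U q : comm U -> (size (U q) <= size q)%N.
Proof.
move=> hU; have := comm_iter (size q) q hU.
rewrite iter_vanish // lin0; last by case: hU.
by move=> e; have := congr1 (fun p : {poly F} => size p) e; rewrite /= size_iter size_poly0 => /esym/eqP; rewrite subn_eq0.
Qed.

Lemma sum_widen_D (c : nat -> F) (r : {poly F}) N : (size r <= N)%N ->
  \sum_(j < size r) c j *: iter j D r = \sum_(j < N) c j *: iter j D r.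
Proof.
move=> h; rewrite (big_ord_widen N (fun j => c j *: iter j D r) h) big_mkcond /=.
by apply: eq_bigr => j _; case: ltnP => // hj; rewrite iter_vanish // scaler0.
Qed.

Lemma sigma_comm T U q : Sigma_psi psi T -> comm U -> T (U q) = U (T q).
Proof.
move=> hT hU; rewrite (sigma_struct (U q) hT) (sigma_struct q hT).
rewrite (sum_widen_D _ (comm_size q hU)).
rewrite (lin_sum _ (cS T) (fun j => iter j D q) hU.1); apply: eq_bigr => j _.
by rewrite (comm_iter _ _ hU).
Qed.

Lemma comm_D : comm D.
Proof. by split; [exact: lin_dpsi|]. Qed.

Lemma sigma_commD T : Sigma_psi psi T -> comm T.
Proof. move=> hT; split; [exact: lin_sigma | move=> q; exact: sigma_comm hT comm_D]. Qed.

Local Notation P := (pincherle psi).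

Lemma X1' r : D (Xh r) = r + Xh (D r).
Proof. by apply/eqP; rewrite -subr_eq X1. Qed.

Lemma comm_comp U V : comm U -> comm V -> comm (fun q => U (V q)).
Proof.
move=> [lU dU] [lV dV]; split; last by move=> q; rewrite dV dU.
by move=> a u v; rewrite lV lU.
Qed.

Lemma comm_pinch U : comm U -> comm (P U).
Proof.
move=> [lU dU]; split.
  move=> a u v; rewrite /pincherle lin_xhat lU lU lin_xhat.
  by rewrite opprD addrACA scalerBr.
move=> q; rewrite /pincherle (linB _ _ lin_dpsi) -dU !X1' dU.
rewrite (linD _ _ lU) opprD addrA; congr (_ - _).
by rewrite addrC addKr.
Qed.

Lemma pinch_comp A B r : lin A ->
  P (fun q => A (B q)) r = A (P B r) + P A (B r).
Proof.
move=> lA; rewrite /pincherle (linB _ _ lA).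
by rewrite addrA subrK.
Qed.

Lemma comm_subc U c : comm U -> comm (fun q => U q - c *: q).
Proof.
move=> [lU dU]; split.
  move=> a u v; rewrite lU scalerDr scalerA mulrC -scalerA.
  by rewrite opprD addrACA scalerBr.
by move=> q; rewrite dU (linB _ _ lin_dpsi) (linZ _ _ lin_dpsi).
Qed.

Variables (S Sinv Q : {poly F} -> {poly F}).
Hypotheses (hS : Sigma_psi psi S) (hSK : cancel S Sinv) (hKS : cancel Sinv S).
Hypothesis hQ : forall q, Q q = D (S q).

Lemma commS : comm S. Proof. exact: sigma_commD. Qed.

Lemma comm_Sinv : comm Sinv.
Proof.
have [lS dS] := commS; split.
  by move=> a u v; apply: (can_inj hSK); rewrite hKS lS !hKS.
by move=> q; apply: (can_inj hSK); rewrite hKS dS hKS.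
Qed.

Lemma Sinv_comm U q : comm U -> Sinv (U q) = U (Sinv q).
Proof. by move=> hU; apply: (can_inj hSK); rewrite hKS (sigma_comm _ hS hU) hKS. Qed.

Lemma comm_iterS k : comm (iter k Sinv).
Proof.
elim: k => [|k IH]; first by split.
exact: (comm_comp comm_Sinv IH).
Qed.

Lemma commQ : comm Q.
Proof.
have h := comm_comp comm_D commS; split.
  by move=> a u v; rewrite !hQ; apply: h.1.
by move=> q; rewrite !hQ; apply: h.2.
Qed.

Local Notation W := (P S).

Lemma commW : comm W. Proof. exact: comm_pinch commS. Qed.

Lemma PQ_Sinv r : P Q (Sinv r) = r + D (W (Sinv r)).
Proof.
rewrite /pincherle !hQ hKS (linB _ _ lin_dpsi) X1'.
by rewrite opprD addrCA addNKr.
Qed.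

Lemma P_Sinv r : P Sinv r = - Sinv (W (Sinv r)).
Proof.
rewrite /pincherle (linB _ _ comm_Sinv.1) hSK.
by rewrite hKS opprB.
Qed.

Lemma P_iterS n r : P (iter n Sinv) r = - (n%:R *: W (iter n.+1 Sinv r)).
Proof.
elim: n r => [|n IH] r.
  by rewrite /pincherle /= subrr scale0r oppr0.
rewrite -[P (iter n.+1 Sinv) r]/(P (fun q => Sinv (iter n Sinv q)) r) (pinch_comp (iter n Sinv) r comm_Sinv.1) IH P_Sinv.
rewrite (linN _ comm_Sinv.1) (linZ _ _ comm_Sinv.1) !(Sinv_comm _ commW).
rewrite -opprD -[in RHS](addn1 n) natrD scalerDl scale1r.
by rewrite addn1.
Qed.

Lemma nr_neq0 n : (0 < n)%N -> (n%:R : F) != 0.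
Proof. by move=> h; rewrite (pcharf0P F).1 // -lt0n. Qed.

Lemma D_small (u : {poly F}) : (size u <= 1)%N -> D u = 0.
Proof. by move=> h; apply/eqP; rewrite -size_poly_eq0 size_dpsi; case: (size u) h => [|[]]. Qed.

Lemma XhDXn n : Xh (D 'X^n) = n%:R *: 'X^n.
Proof.
rewrite dpsiXn; case: n => [|m].
  by rewrite [npsi psi 0]/= scale0r (lin0 lin_xhat).
rewrite /= (linZ _ _ lin_xhat) xhatXn scalerA.
by rewrite mulrC divfK // npsi_neq0.
Qed.

Definition tt n := (n%:R)^-1 *: Xh (D (iter n Sinv 'X^n)).

Lemma e3 n : (0 < n)%N ->
  (npsi psi n / n%:R) *: Xh (iter n Sinv 'X^(n.-1)) = tt n.
Proof.
move=> hn; rewrite /tt -(comm_iterS n).2 dpsiXn (linZ _ _ (comm_iterS n).1).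
by rewrite (linZ _ _ lin_xhat) scalerA mulrC.
Qed.

Lemma e2 n : (0 < n)%N ->
  iter n Sinv 'X^n - (npsi psi n / n%:R) *: P (iter n Sinv) 'X^(n.-1)
  = (npsi psi n / n%:R) *: Xh (iter n Sinv 'X^(n.-1)).
Proof.
move=> hn; rewrite /pincherle xhatXn (prednK hn) (linZ _ _ (comm_iterS n).1).
rewrite scalerBr scalerA.
have -> : npsi psi n / n%:R * (n%:R / npsi psi n) = 1.
  by rewrite mulrA divfK ?nr_neq0 // mulfV // npsi_neq0.
by rewrite scale1r opprB addrC subrK.
Qed.

Lemma e1 n : (0 < n)%N -> P Q (iter n.+1 Sinv 'X^n) = tt n.
Proof.
move=> hn; set Y := iter n Sinv 'X^n.
have hw : W (Sinv Y) = - ((n%:R)^-1 *: P (iter n Sinv) 'X^n).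
  rewrite P_iterS scalerN opprK scalerA mulVf ?nr_neq0 // scale1r.
  by [].
have hd : D (P (iter n Sinv) 'X^n) = n%:R *: Y - Xh (D Y).
  rewrite /pincherle (linB _ _ lin_dpsi) -(comm_iterS n).2 X1' XhDXn.
  rewrite (linD _ _ (comm_iterS n).1) (linZ _ _ (comm_iterS n).1) X1' -/Y.
  by rewrite opprD addrACA subrr add0r.
change (P Q (Sinv Y) = tt n).
rewrite PQ_Sinv hw (linN _ lin_dpsi) (linZ _ _ lin_dpsi) hd scalerBr scalerA.
by rewrite mulVf ?nr_neq0 // scale1r opprB addrCA subrr addr0.
Qed.

Definition qs n := P Q (iter n.+1 Sinv 'X^n).

Lemma commPQ : comm (P Q). Proof. exact: comm_pinch commQ. Qed.

Lemma Q_qs n : Q (qs n.+1) = npsi psi n.+1 *: qs n.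
Proof.
rewrite /qs; change (Q (P Q (Sinv (iter n.+1 Sinv 'X^(n.+1)))) = npsi psi n.+1 *: P Q (iter n.+1 Sinv 'X^n)).
rewrite hQ (sigma_comm _ hS commPQ) hKS -commPQ.2 -(comm_iterS n.+1).2 dpsiXn.
by rewrite (linZ _ _ (comm_iterS n.+1).1) (linZ _ _ commPQ.1).
Qed.

Lemma qs0 : qs 0 = 1.
Proof.
rewrite /qs expr0; change (P Q (Sinv 1) = 1).
rewrite PQ_Sinv D_small ?addr0 //.
apply: leq_trans (comm_size _ commW) _; apply: leq_trans (comm_size _ comm_Sinv) _.
by rewrite size_poly1.
Qed.

Lemma qs_at0 n : (0 < n)%N -> (qs n).[0] = 0.
Proof. by move=> hn; rewrite /qs e1 // /tt hornerZ xhat0 mulr0. Qed.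

Lemma kerQ (r : {poly F}) : Q r = 0 -> r.[0] = 0 -> r = 0.
Proof.
rewrite hQ => h0 h1.
have hs : (size (S r) <= 1)%N.
  by move: (congr1 (fun u : {poly F} => size u) h0); rewrite /= size_dpsi size_poly0; case: (size (S r)) => [|[]].
have hr : (size r <= 1)%N by rewrite -(hSK r); apply: leq_trans (comm_size _ comm_Sinv) hs.
by rewrite (size1_polyC hr) -horner_coef0 h1.
Qed.

Lemma p_qs (p : nat -> {poly F}) : basic_seq psi Q p -> forall n, p n = qs n.
Proof.
case=> _ hp0 hp1 hp2; elim=> [|n IH]; first by rewrite hp0 qs0.
apply/eqP; rewrite -subr_eq0; apply/eqP; apply: kerQ.
  by rewrite (linB _ _ commQ.1) hp2 Q_qs /= IH subrr.
by rewrite hornerD hornerN hp1 // qs_at0 // subrr.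
Qed.

Lemma sum_widen_van (f : nat -> {poly F}) n N : (n <= N)%N ->
  (forall k, (n <= k)%N -> f k = 0) -> \sum_(k < n) f k = \sum_(k < N) f k.
Proof.
move=> h hv; rewrite (big_ord_widen N f h) big_mkcond /=.
by apply: eq_bigr => j _; case: ltnP => // hj; rewrite hv.
Qed.

Section Inverse.
Variable c0 : F.
Hypothesis c0nz : c0 != 0.
Hypothesis hc0 : P Q 1 = c0%:P.

Definition Wq q := P Q q - c0 *: q.

Lemma commWq : comm Wq. Proof. exact: comm_subc commPQ. Qed.

Lemma Wq_const (u : {poly F}) : (size u <= 1)%N -> Wq u = 0.
Proof.
move=> h; rewrite (size1_polyC h) -alg_polyC (linZ _ _ commWq.1).
by rewrite /Wq hc0 -alg_polyC subrr scaler0.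
Qed.

Lemma size_Wq q : (size (Wq q) <= (size q).-1)%N.
Proof.
have := comm_iter (size q).-1 q commWq.
rewrite Wq_const; last by rewrite size_iter; case: (size q) => [|m] //=; rewrite subSn // subnn.
move=> e; have := congr1 (fun p : {poly F} => size p) e.
by rewrite /= size_iter size_poly0 => /esym/eqP; rewrite subn_eq0.
Qed.

Lemma size_iterWq k (q : {poly F}) : (size (iter k Wq q) <= size q - k)%N.
Proof.
elim: k => [|k IH]; first by rewrite subn0.
rewrite iterS; apply: leq_trans (size_Wq _) _.
by rewrite subnS -!subn1 leq_sub2r.
Qed.

Lemma iterWq_vanish k (q : {poly F}) : (size q <= k)%N -> iter k Wq q = 0.
Proof.
move=> h; apply/eqP; rewrite -size_poly_eq0 -leqn0.
by apply: leq_trans (size_iterWq k q) _; rewrite leqn0 subn_eq0.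
Qed.

Definition Qinv (q : {poly F}) := c0^-1 *: \sum_(k < size q) ((- c0^-1) ^+ k) *: iter k Wq q.

Lemma PQ_eq q : P Q q = Wq q + c0 *: q.
Proof. by rewrite /Wq subrK. Qed.

Lemma cancel2 : cancel Qinv (P Q).
Proof.
move=> q; rewrite PQ_eq /Qinv (linZ _ _ commWq.1).
rewrite (lin_sum _ (fun k => (- c0^-1) ^+ k) (fun k => iter k Wq q) commWq.1).
rewrite scalerA mulfV // scale1r scaler_sumr -big_split /=.
pose u k := (- c0^-1) ^+ k *: iter k Wq q.
have -> : \sum_(i < size q) (c0^-1 *: ((- c0^-1) ^+ i *: Wq (iter i Wq q)) + (- c0^-1) ^+ i *: iter i Wq q)
  = \sum_(i < size q) - (u i.+1 - u i).
  apply: eq_bigr => i _; rewrite /u opprB exprSr mulrN scaleNr opprK addrC.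
  by rewrite !scalerA [c0^-1 * _]mulrC.
rewrite sumrN -(big_mkord xpredT (fun i => u i.+1 - u i)) telescope_sumr //.
by rewrite /u iterWq_vanish // scaler0 expr0 scale1r sub0r opprK.
Qed.

Lemma Wq_PQ q : Wq (P Q q) = P Q (Wq q).
Proof. by rewrite /Wq (linB (P Q q) (c0 *: q) commPQ.1) (linZ c0 q commPQ.1). Qed.

Lemma cancel1 : cancel (P Q) Qinv.
Proof.
move=> q; rewrite /Qinv.
rewrite (@sum_widen_van (fun k => (- c0^-1) ^+ k *: iter k Wq (P Q q)) (size (P Q q)) (size q) (comm_size _ commPQ)); last first.
  by move=> k hk; rewrite iterWq_vanish // scaler0.
have -> : \sum_(k < size q) (- c0^-1) ^+ k *: iter k Wq (P Q q)
  = \sum_(k < size q) (- c0^-1) ^+ k *: P Q (iter k Wq q).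
  apply: eq_bigr => k _; congr (_ *: _); elim: (nat_of_ord k) => [|m IH] //=.
  by rewrite IH Wq_PQ.
rewrite -(lin_sum _ (fun k => (- c0^-1) ^+ k) (fun k => iter k Wq q) commPQ.1).
by rewrite -(linZ _ _ commPQ.1) -/(Qinv q) cancel2.
Qed.

End Inverse.

Lemma PQ1 c : Q 'X = c%:P -> P Q 1 = ((npsi psi 1)^-1 * c)%:P.
Proof.
move=> hc; rewrite /pincherle -[1](expr0 'X) xhatXn expr1 (linZ _ _ commQ.1) hc.
rewrite [Q 'X^0]hQ [D (S _)]D_small; last first.
  by apply: leq_trans (comm_size _ commS) _; rewrite expr0 size_poly1.
by rewrite (lin0 lin_xhat) subr0 scale_polyC div1r.
Qed.

Lemma main_sec (p : nat -> {poly F}) :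
  delta_op psi Q ->
  basic_seq psi Q p ->
  (forall n : nat, (0 < n)%N ->
     [/\ p n = pincherle psi Q (iter n.+1 Sinv ('X ^+ n)),
         p n = iter n Sinv ('X ^+ n)
               - (npsi psi n / n%:R) *: pincherle psi (iter n Sinv) ('X ^+ n.-1)
       & p n = (npsi psi n / n%:R) *: xhat psi (iter n Sinv ('X ^+ n.-1))])
  /\
  (exists Qinv : {poly F} -> {poly F},
     [/\ cancel (pincherle psi Q) Qinv, cancel Qinv (pincherle psi Q)
       & forall n : nat, (0 < n)%N ->
           p n = (npsi psi n / n%:R) *: xhat psi (Qinv (p n.-1))]).
Proof.
move=> [_ [c [cnz hc]]] hb; have hpq := p_qs hb.
have h123 : forall n : nat, (0 < n)%N ->
     [/\ p n = pincherle psi Q (iter n.+1 Sinv ('X ^+ n)),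
         p n = iter n Sinv ('X ^+ n)
               - (npsi psi n / n%:R) *: pincherle psi (iter n Sinv) ('X ^+ n.-1)
       & p n = (npsi psi n / n%:R) *: xhat psi (iter n Sinv ('X ^+ n.-1))].
  move=> n hn; have e : p n = tt n by rewrite hpq /qs e1.
  by split; rewrite ?e2 // e3 // e.
split=> //.
have c0nz : (npsi psi 1)^-1 * c != 0 by rewrite mulf_neq0 // invr_eq0 npsi_neq0.
have hc0 := PQ1 hc.
exists (Qinv ((npsi psi 1)^-1 * c)); split.
- exact: cancel1.
- exact: cancel2.
move=> n hn; have [_ _ ->] := h123 n hn; congr (_ *: xhat psi _).
rewrite hpq /qs (prednK hn) cancel1 //.
Qed.

End Basics.

Theorem theorem2p1 (F : fieldType) (charF0 : [pchar F] =i pred0)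
    (psi : nat -> F) (Q S Sinv : {poly F} -> {poly F}) (p : nat -> {poly F}) :
  admissible psi ->
  delta_op psi Q ->
  basic_seq psi Q p ->
  Sigma_psi psi S ->
  cancel S Sinv -> cancel Sinv S ->
  (forall q, Q q = dpsi psi (S q)) ->
  (forall n : nat, (0 < n)%N ->
     [/\ p n = pincherle psi Q (iter n.+1 Sinv ('X ^+ n)),
         p n = iter n Sinv ('X ^+ n)
               - (npsi psi n / n%:R) *: pincherle psi (iter n Sinv) ('X ^+ n.-1)
       & p n = (npsi psi n / n%:R) *: xhat psi (iter n Sinv ('X ^+ n.-1))])
  /\
  (exists Qinv : {poly F} -> {poly F},
     [/\ cancel (pincherle psi Q) Qinv, cancel Qinv (pincherle psi Q)
       & forall n : nat, (0 < n)%N ->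
           p n = (npsi psi n / n%:R) *: xhat psi (Qinv (p n.-1))]).
Proof.
move=> Hpsi hd hb hS hSK hKS hQ.
exact: (main_sec Hpsi charF0 hS hSK hKS hQ hd hb).
Qed.
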